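(* Let $m_i>0$, $v_{ik}\in\mathbb R$ and $\eta_{il}\in\mathbb R$ ($i=1,\dots,n$, $l=1,\dots,p$) be given, with $\eta_{ij}$ depending on the coordinate $\varphi_{jk}$ through $\eta_{ij}=c_{ij}+v_{ik}\varphi_{jk}$ and the $\eta_{il}$, $l\ne j$, not depending on $\varphi_{jk}$. Let $q_{ij}(\varphi_{jk})=e^{\eta_{ij}}/\sum_{l=1}^pe^{\eta_{il}}$ and $h(\varphi_{jk})=\sum_{i=1}^n m_iv_{ik}^2q_{ij}(1-q_{ij})$. Fix the current value $\varphi_{jk}$ and $\delta>0$; set $E_{ij}=\sum_{l\ne j}e^{\eta_{il}}$ and $$e_{ij}=\begin{cases}e^{\eta_{ij}-|v_{ik}|\delta}&\text{if }E_{ij}<e^{\eta_{ij}-|v_{ik}|\delta},\\ e^{\eta_{ij}+|v_{ik}|\delta}&\text{if }E_{ij}>e^{\eta_{ij}+|v_{ik}|\delta},\\ E_{ij}&\text{otherwise},\end{cases}\qquad F_{ij}=\frac{e_{ij}}{E_{ij}}+\frac{E_{ij}}{e_{ij}}+2,$$ where $\eta_{ij}$ is evaluated at the current $\varphi_{jk}$. Then $H_{jk}=\sum_{i=1}^n m_iv_{ik}^2/F_{ij}$ satisfies $h(\varphi^\star)\le H_{jk}$ for every $\varphi^\star$ with $|\varphi^\star-\varphi_{jk}|\le\delta$.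
   Context: This is the trust-region curvature bound for coordinate descent on the negative multinomial logistic log likelihood $l=-\sum_i[\sum_j x_{ij}\eta_{ij}-m_i\log\sum_l e^{\eta_{il}}]$, whose second derivative in $\varphi_{jk}$ is $h$. *)

(* Defs.v *)
From Stdlib Require Import Reals Lra.
Open Scope R_scope.

Fixpoint rsum (n : nat) (f : nat -> R) : R :=
  match n with
  | O => 0
  | S k => rsum k f + f k
  end.

(* Linear predictors eta_{il} as a function of the coordinate phi = phi_{jk}:
   eta_{ij}(phi) = c_{ij} + v_{ik} phi, and eta_{il} (l <> j) fixed. *)
Definition etaF (c v : nat -> R) (eta : nat -> nat -> R) (j : nat) (phi : R)
  (i l : nat) : R :=
  if Nat.eqb l j then c i + v i * phi else eta i l.

Definition qF (p : nat) (c v : nat -> R) (eta : nat -> nat -> R) (j : nat)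
  (phi : R) (i : nat) : R :=
  exp (etaF c v eta j phi i j) / rsum p (fun l => exp (etaF c v eta j phi i l)).

Definition hF (n p : nat) (m c v : nat -> R) (eta : nat -> nat -> R) (j : nat)
  (phi : R) : R :=
  rsum n (fun i => m i * (v i) ^ 2 * qF p c v eta j phi i * (1 - qF p c v eta j phi i)).

Definition EF (p : nat) (c v : nat -> R) (eta : nat -> nat -> R) (j : nat)
  (phi : R) (i : nat) : R :=
  rsum p (fun l => if Nat.eqb l j then 0 else exp (etaF c v eta j phi i l)).

Definition eF (p : nat) (c v : nat -> R) (eta : nat -> nat -> R) (j : nat)
  (phi delta : R) (i : nat) : R :=
  let E := EF p c v eta j phi i in
  let lo := exp (etaF c v eta j phi i j - Rabs (v i) * delta) in
  let hi := exp (etaF c v eta j phi i j + Rabs (v i) * delta) in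
  if Rlt_dec E lo then lo else if Rlt_dec hi E then hi else E.

Definition FF (p : nat) (c v : nat -> R) (eta : nat -> nat -> R) (j : nat)
  (phi delta : R) (i : nat) : R :=
  eF p c v eta j phi delta i / EF p c v eta j phi i
  + EF p c v eta j phi i / eF p c v eta j phi delta i + 2.

Definition HF (n p : nat) (m c v : nat -> R) (eta : nat -> nat -> R) (j : nat)
  (phi delta : R) : R :=
  rsum n (fun i => m i * (v i) ^ 2 / FF p c v eta j phi delta i).

(* Main.v *)
Require Import Defs.
From Stdlib Require Import Reals Lra.
Open Scope R_scope.
From Stdlib Require Import Arith Lia.
Lemma key (a E lo hi : R): 0<lo -> lo<=a -> a<=hi -> 0<=E ->
  a/(a+E) * (1 - a/(a+E)) <= 1/((if Rlt_dec E lo then lo else if Rlt_dec hi E then hi else E)/E + E/(if Rlt_dec E lo then lo else if Rlt_dec hi E then hi else E) + 2).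
Proof.
  intros Hlo H1 H2 HE.
  set (e := if Rlt_dec E lo then lo else if Rlt_dec hi E then hi else E).
  assert (Hc : (a - e) * (a*e - E*E) >= 0 /\ 0 < e).
  { unfold e; destruct (Rlt_dec E lo); [|destruct (Rlt_dec hi E)]; (split; [|lra]).
    - assert (0 <= a - lo) by lra. assert (0 <= a*lo - E*E) by nra. nra.
    - assert (0 <= hi - a) by lra. assert (0 <= E*E - a*hi) by nra. nra.
    - replace ((a - E) * (a * E - E * E)) with (E*((a-E)*(a-E))) by ring. apply Rle_ge, Rmult_le_pos; [lra | apply Rle_0_sqr]. }
  destruct Hc as [Hc He].
  destruct (Req_dec E 0) as [E0|E0].
  - subst E. replace (e/0) with 0 by (unfold Rdiv; rewrite Rinv_0; ring).
    replace (a/(a+0)) with 1 by (field; lra). replace (0/e) with 0 by (unfold Rdiv; ring). lra.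
  - assert (0<E) by lra.
    replace (a/(a+E) * (1 - a/(a+E))) with (a*E/((a+E)*(a+E))) by (field; lra).
    replace (1/(e/E + E/e + 2)) with (e*E/((e+E)*(e+E))) by (field; nra).
    assert (D: e*E/((e+E)*(e+E)) - a*E/((a+E)*(a+E)) = E*((a - e) * (a*e - E*E))/(((e+E)*(e+E))*((a+E)*(a+E)))) by (field; nra).
    assert (0 <= E*((a - e) * (a*e - E*E))/(((e+E)*(e+E))*((a+E)*(a+E)))).
    { unfold Rdiv; apply Rmult_le_pos; [apply Rmult_le_pos; [lra|apply Rge_le; exact Hc]|]. apply Rlt_le, Rinv_0_lt_compat, Rmult_lt_0_compat; nra. }
    lra.
Qed.

Lemma exp_le_m x y : x <= y -> exp x <= exp y.
Proof. intros H; destruct (Rle_lt_or_eq_dec _ _ H) as [h|h]; [left; apply exp_increasing; auto | rewrite h; lra]. Qed.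

Lemma rsum_le n f g : (forall i, (i < n)%nat -> f i <= g i) -> rsum n f <= rsum n g.
Proof. induction n; simpl; intros H; [lra|]. assert (f n <= g n) by (apply H; lia).
  assert (rsum n f <= rsum n g) by (apply IHn; intros; apply H; lia). lra. Qed.

Lemma rsum_ext n f g : (forall i, (i < n)%nat -> f i = g i) -> rsum n f = rsum n g.
Proof. induction n; simpl; intros H; [lra|]. rewrite (H n) by lia. rewrite IHn; [reflexivity|].
  intros; apply H; lia. Qed.

Lemma rsum_split p j f : (j < p)%nat ->
  rsum p f = f j + rsum p (fun l => if Nat.eqb l j then 0 else f l).
Proof. induction p; intros Hj; [lia|]. simpl.
  destruct (Nat.eq_dec j p) as [->|Hne].
  - rewrite Nat.eqb_refl. rewrite (rsum_ext p (fun l => if Nat.eqb l p then 0 else f l) f). ring.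
    intros i Hi. destruct (Nat.eqb_spec i p); [lia|auto].
  - rewrite IHp by lia. destruct (Nat.eqb_spec p j); [lia|]. ring. Qed.

Theorem mainTheorem7 (n p : nat) (m c v : nat -> R) (eta : nat -> nat -> R)
  (j : nat) (phi delta : R)
  (Hm : forall i, (i < n)%nat -> 0 < m i)
  (Hj : (j < p)%nat)
  (Hdelta : 0 < delta) :
  forall phistar : R, Rabs (phistar - phi) <= delta ->
    hF n p m c v eta j phistar <= HF n p m c v eta j phi delta.
Proof.
  intros ps Hps. unfold hF, HF. apply rsum_le. intros i Hi.
  assert (HEq : EF p c v eta j ps i = EF p c v eta j phi i).
  { unfold EF. apply rsum_ext. intros l _. unfold etaF. destruct (Nat.eqb l j); reflexivity. }
  assert (Hq : qF p c v eta j ps i = exp (c i + v i * ps) / (exp (c i + v i * ps) + EF p c v eta j phi i)).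
  { unfold qF. rewrite (rsum_split p j) by exact Hj. rewrite <- HEq. unfold EF.
    unfold etaF at 1 2. rewrite Nat.eqb_refl. reflexivity. }
  rewrite Hq.
  assert (HE0 : 0 <= EF p c v eta j phi i).
  { unfold EF. clear. induction p; simpl; [lra|]. destruct (Nat.eqb p j).
    lra. pose proof (exp_pos (etaF c v eta j phi i p)). lra. }
  assert (Hb : Rabs (v i * (ps - phi)) <= Rabs (v i) * delta).
  { rewrite Rabs_mult. apply Rmult_le_compat_l; [apply Rabs_pos|exact Hps]. }
  assert (Hb2 : - (Rabs (v i) * delta) <= v i * (ps - phi) <= Rabs (v i) * delta).
  { pose proof (Rle_abs (v i * (ps - phi))). pose proof (Rle_abs (- (v i * (ps - phi)))). rewrite Rabs_Ropp in *. lra. }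
  pose proof (key (exp (c i + v i * ps)) (EF p c v eta j phi i)
     (exp (etaF c v eta j phi i j - Rabs (v i) * delta))
     (exp (etaF c v eta j phi i j + Rabs (v i) * delta))) as K.
  unfold FF, eF. fold (EF p c v eta j phi i).
  set (E := EF p c v eta j phi i) in *.
  assert (Hx : exp (etaF c v eta j phi i j - Rabs (v i) * delta) <= exp (c i + v i * ps)
    /\ exp (c i + v i * ps) <= exp (etaF c v eta j phi i j + Rabs (v i) * delta)).
  { unfold etaF; rewrite Nat.eqb_refl. split; apply exp_le_m; nra. }
  destruct Hx as [Hx1 Hx2].
  specialize (K (exp_pos _) Hx1 Hx2 HE0).
  set (F := _ / E + _ + 2) in *.
  set (Q := exp (c i + v i * ps) / (exp (c i + v i * ps) + E)) in *.
  assert (0 <= m i * v i ^ 2) by (pose proof (Hm i Hi); nra).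
  replace (m i * v i ^ 2 / F) with (m i * v i ^ 2 * (1 / F)) by (unfold Rdiv; ring).
  replace (m i * v i ^ 2 * Q * (1 - Q)) with (m i * v i ^ 2 * (Q * (1 - Q))) by ring.
  apply Rmult_le_compat_l; [auto|]. exact K.
Qed.
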